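(* Let $\mathcal{P}$ be a class of Banach spaces containing all finite-dimensional Banach spaces, and let $\{S_n\}_{n=1}^\infty$ be a sequence of finite metric spaces which is a set of test-spaces for $\mathcal{P}$. Then there exists a metric space $S$ such that $\{S\}$ is a set of test-spaces for $\mathcal{P}$.
   Context: A set $\{T_\alpha\}_{\alpha\in A}$ of metric spaces is a set of test-spaces for a class $\mathcal{P}$ of Banach spaces if for every Banach space $X$ the following are equivalent: (1) $X\notin\mathcal{P}$; (2) the spaces $T_\alpha$ admit bilipschitz embeddings into $X$ with uniformly bounded distortions (distortion of $f$ being $\mathrm{Lip}(f)\cdot\mathrm{Lip}(f^{-1})$). For a single space $S$, (2) means $S$ admits a bilipschitz embedding into $X$. *)

(* Defs.v *)
From Stdlib Require Import Reals Lra List.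
Open Scope R_scope.

Record MetricSpace := {
  ms_car :> Type;
  ms_dist : ms_car -> ms_car -> R;
  ms_dist_nonneg : forall x y, 0 <= ms_dist x y;
  ms_dist_eq0 : forall x y, ms_dist x y = 0 <-> x = y;
  ms_dist_sym : forall x y, ms_dist x y = ms_dist y x;
  ms_dist_tri : forall x y z, ms_dist x z <= ms_dist x y + ms_dist y z
}.

Definition finite_metric (M : MetricSpace) : Prop :=
  exists l : list (ms_car M), forall x, In x l.

Record BanachSpace := {
  bs_car :> Type;
  bs_zero : bs_car;
  bs_add : bs_car -> bs_car -> bs_car;
  bs_opp : bs_car -> bs_car;
  bs_scal : R -> bs_car -> bs_car;
  bs_norm : bs_car -> R;
  bs_addA : forall x y z, bs_add x (bs_add y z) = bs_add (bs_add x y) z;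
  bs_addC : forall x y, bs_add x y = bs_add y x;
  bs_add0 : forall x, bs_add x bs_zero = x;
  bs_addN : forall x, bs_add x (bs_opp x) = bs_zero;
  bs_scalA : forall a b x, bs_scal a (bs_scal b x) = bs_scal (a * b) x;
  bs_scal1 : forall x, bs_scal 1 x = x;
  bs_scalDr : forall a x y, bs_scal a (bs_add x y) = bs_add (bs_scal a x) (bs_scal a y);
  bs_scalDl : forall a b x, bs_scal (a + b) x = bs_add (bs_scal a x) (bs_scal b x);
  bs_norm_nonneg : forall x, 0 <= bs_norm x;
  bs_norm_eq0 : forall x, bs_norm x = 0 <-> x = bs_zero;
  bs_norm_scal : forall a x, bs_norm (bs_scal a x) = Rabs a * bs_norm x;
  bs_norm_tri : forall x y, bs_norm (bs_add x y) <= bs_norm x + bs_norm y;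
  bs_complete : forall u : nat -> bs_car,
    (forall eps, 0 < eps -> exists N, forall m n, (N <= m)%nat -> (N <= n)%nat ->
        bs_norm (bs_add (u m) (bs_opp (u n))) < eps) ->
    exists l, forall eps, 0 < eps -> exists N, forall n, (N <= n)%nat ->
        bs_norm (bs_add (u n) (bs_opp l)) < eps
}.

Definition bs_dist (X : BanachSpace) (x y : X) : R :=
  bs_norm X (bs_add X x (bs_opp X y)).

Fixpoint lin_comb (X : BanachSpace) (cs : list R) (vs : list X) : X :=
  match cs, vs with
  | c :: cs', v :: vs' => bs_add X (bs_scal X c v) (lin_comb X cs' vs')
  | _, _ => bs_zero X
  end.

Definition finite_dim (X : BanachSpace) : Prop :=
  exists vs : list X, forall x, exists cs : list R,
    length cs = length vs /\ x = lin_comb X cs vs.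

(** f : M -> X is a bilipschitz embedding with distortion at most D:
    there is a scale r > 0 with r d(x,y) <= ||f x - f y|| <= D r d(x,y).
    (For such f, Lip(f) * Lip(f^{-1}) <= D, and conversely.) *)
Definition embeds_with_distortion (M : MetricSpace) (X : BanachSpace) (D : R) : Prop :=
  exists (f : M -> X) (r : R), 0 < r /\
    forall x y, r * ms_dist M x y <= bs_dist X (f x) (f y)
                /\ bs_dist X (f x) (f y) <= D * r * ms_dist M x y.

Definition test_spaces {A : Type} (T : A -> MetricSpace)
    (P : BanachSpace -> Prop) : Prop :=
  forall X : BanachSpace,
    ~ P X <-> exists D : R, forall a : A, embeds_with_distortion (T a) X D.

Definition test_space (S : MetricSpace) (P : BanachSpace -> Prop) : Prop :=
  test_spaces (fun _ : unit => S) P.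

(* Main.v *)
Require Import Defs.
From Stdlib Require Import Reals List.
From Stdlib Require Import Lra Lia Classical ClassicalEpsilon Eqdep_dec.
Open Scope R_scope.

Section Alg.
Variable X : BanachSpace.
Notation add := (bs_add X).
Notation opp := (bs_opp X).
Notation scal := (bs_scal X).
Notation nrm := (bs_norm X).
Notation zero := (bs_zero X).

Lemma add0l x : add zero x = x.
Proof. rewrite bs_addC, bs_add0; reflexivity. Qed.

Lemma scal0 x : scal 0 x = zero.
Proof.
  set (s := scal 0 x).
  assert (Hs : s = add s s) by (unfold s; rewrite <- bs_scalDl; f_equal; lra).
  transitivity (add (add s s) (opp s)).
  - rewrite <- bs_addA, bs_addN, bs_add0. reflexivity.
  - rewrite <- Hs. apply bs_addN.
Qed.

Lemma opp_unique x y : add x y = zero -> y = opp x.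
Proof.
  intro H. rewrite <- (bs_add0 X (opp x)), <- H, bs_addA.
  rewrite (bs_addC X (opp x) x), bs_addN, add0l. reflexivity.
Qed.

Lemma opp_scal x : opp x = scal (-1) x.
Proof.
  symmetry. apply opp_unique.
  rewrite <- (bs_scal1 X x) at 1. rewrite <- bs_scalDl.
  replace (1 + -1) with 0 by lra. apply scal0.
Qed.

Lemma norm_opp x : nrm (opp x) = nrm x.
Proof. rewrite opp_scal, bs_norm_scal. replace (Rabs (-1)) with 1; [lra|]. rewrite Rabs_left; lra. Qed.

Lemma opp_add x y : opp (add x y) = add (opp x) (opp y).
Proof. rewrite !opp_scal, bs_scalDr; reflexivity. Qed.

Lemma scal_sub a x y : scal a (add x (opp y)) = add (scal a x) (opp (scal a y)).
Proof.
  rewrite !opp_scal, bs_scalDr, !bs_scalA. f_equal. f_equal. lra.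
Qed.

Lemma sub_scal a b u : add (scal a u) (opp (scal b u)) = scal (a - b) u.
Proof.
  rewrite opp_scal, bs_scalA, <- bs_scalDl. f_equal. lra.
Qed.

Lemma swap4 a b c d : add (add a b) (add c d) = add (add a c) (add b d).
Proof.
  rewrite !bs_addA. f_equal. rewrite <- !bs_addA. f_equal. apply bs_addC.
Qed.

Lemma sub_add_add p t q w :
  add (add p t) (opp (add q w)) = add (add p (opp q)) (add t (opp w)).
Proof. rewrite opp_add, swap4. reflexivity. Qed.

Lemma sub_same p t q :
  add (add p t) (opp (add q t)) = add p (opp q).
Proof. rewrite sub_add_add, bs_addN, bs_add0. reflexivity. Qed.

Lemma rev_tri a b : nrm b - nrm a <= nrm (add a b).
Proof.
  assert (E : b = add (add a b) (opp a)).
  { rewrite (bs_addC X a b), <- bs_addA, bs_addN, bs_add0; reflexivity. }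
  pose proof (bs_norm_tri X (add a b) (opp a)). rewrite <- E, norm_opp in H. lra.
Qed.

Lemma norm_sub_le a b : nrm (add a (opp b)) <= nrm a + nrm b.
Proof. rewrite <- (norm_opp b). apply bs_norm_tri. Qed.
End Alg.

Definition car (Sn : nat -> MetricSpace) := {n : nat & ms_car (Sn n)}.

Definition dS (Sn : nat -> MetricSpace) (B : nat -> R) (p q : car Sn) : R :=
  match p, q with
  | existT _ n x, existT _ m y =>
    match Nat.eq_dec n m with
    | left e => / (1 + B m) * ms_dist (Sn m) (eq_rect n (fun k => ms_car (Sn k)) x m e) y
    | right _ => Rabs (INR n - INR m)
    end
  end.

Section Glue.
Variable Sn : nat -> MetricSpace.
Variable B : nat -> R.
Hypothesis hB : forall n, 0 <= B n /\ forall x y, ms_dist (Sn n) x y <= B n.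

Lemma dS_same n x y : dS Sn B (existT _ n x) (existT _ n y) = /(1+B n) * ms_dist _ x y.
Proof.
  simpl. destruct (Nat.eq_dec n n) as [e|ne]; [|congruence].
  rewrite (UIP_refl_nat _ e). reflexivity.
Qed.

Lemma dS_diff n m x y : n <> m -> dS Sn B (existT _ n x) (existT _ m y) = Rabs (INR n - INR m).
Proof. intro H. simpl. destruct (Nat.eq_dec n m); [congruence|reflexivity]. Qed.

Lemma INR_sep n m : n <> m -> 1 <= Rabs (INR n - INR m).
Proof.
  intro H. destruct (Nat.lt_gt_cases n m) as [[Hl|Hl] _]; [exact H| |].
  - assert (INR (S n) <= INR m) by (apply le_INR; lia). rewrite S_INR in H0.
    unfold Rabs; destruct Rcase_abs; lra.
  - assert (INR (S m) <= INR n) by (apply le_INR; lia). rewrite S_INR in H0.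
    unfold Rabs; destruct Rcase_abs; lra.
Qed.

Lemma s_pos n : 0 < / (1 + B n).
Proof. destruct (hB n). apply Rinv_0_lt_compat; lra. Qed.

Lemma s_le1 n x y : / (1 + B n) * ms_dist (Sn n) x y <= 1.
Proof.
  destruct (hB n) as [H0 H1]. specialize (H1 x y).
  pose proof (s_pos n).
  apply Rle_trans with (/(1+B n)*(1+B n)).
  - apply Rmult_le_compat_l; lra.
  - rewrite Rinv_l; lra.
Qed.

Lemma dS_nonneg p q : 0 <= dS Sn B p q.
Proof.
  destruct p as [n x], q as [m y].
  destruct (Nat.eq_dec n m) as [<-|H].
  - rewrite dS_same. apply Rmult_le_pos; [left; apply s_pos|apply ms_dist_nonneg].
  - rewrite dS_diff by exact H. apply Rabs_pos.
Qed.

Lemma dS_eq0 p q : dS Sn B p q = 0 <-> p = q.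
Proof.
  destruct p as [n x], q as [m y].
  destruct (Nat.eq_dec n m) as [<-|H].
  - rewrite dS_same. split.
    + intro E. apply Rmult_integral in E. destruct E as [E|E].
      * pose proof (s_pos n). lra.
      * apply ms_dist_eq0 in E. subst. reflexivity.
    + intro E. apply inj_pair2_eq_dec in E; [|exact Nat.eq_dec]. subst.
      rewrite (proj2 (ms_dist_eq0 _ y y) eq_refl). ring.
  - rewrite dS_diff by exact H. split.
    + intro E. pose proof (INR_sep _ _ H). lra.
    + intro E. apply (f_equal (@projT1 _ _)) in E. simpl in E. congruence.
Qed.

Lemma dS_sym p q : dS Sn B p q = dS Sn B q p.
Proof.
  destruct p as [n x], q as [m y].
  destruct (Nat.eq_dec n m) as [<-|H].
  - rewrite !dS_same, ms_dist_sym. reflexivity.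
  - rewrite !dS_diff by congruence. apply Rabs_minus_sym.
Qed.

Lemma dS_tri p q r : dS Sn B p r <= dS Sn B p q + dS Sn B q r.
Proof.
  destruct p as [n x], q as [m y], r as [k z].
  destruct (Nat.eq_dec n m) as [<-|Hnm].
  - destruct (Nat.eq_dec n k) as [<-|Hnk].
    + rewrite !dS_same. pose proof (ms_dist_tri _ x y z). pose proof (s_pos n).
      rewrite <- Rmult_plus_distr_l. apply Rmult_le_compat_l; lra.
    + rewrite !dS_diff by exact Hnk. rewrite dS_same.
      pose proof (dS_nonneg (existT _ n x) (existT _ n y)). rewrite dS_same in H. rewrite (dS_diff _ _ _ _ Hnk); lra.
  - destruct (Nat.eq_dec m k) as [<-|Hmk].
    + rewrite !(dS_diff _ _ _ _ Hnm). rewrite dS_same.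
      pose proof (dS_nonneg (existT _ m y) (existT _ m z)). rewrite dS_same in H. lra.
    + rewrite (dS_diff _ _ _ _ Hnm), (dS_diff _ _ _ _ Hmk).
      destruct (Nat.eq_dec n k) as [<-|Hnk].
      * rewrite dS_same. pose proof (s_le1 n x z).
        pose proof (INR_sep _ _ Hnm). pose proof (INR_sep _ _ Hmk). lra.
      * rewrite dS_diff by exact Hnk.
        replace (INR n - INR k) with ((INR n - INR m) + (INR m - INR k)) by ring.
        apply Rabs_triang.
Qed.

Definition glue : MetricSpace :=
  {| ms_car := car Sn; ms_dist := dS Sn B;
     ms_dist_nonneg := dS_nonneg; ms_dist_eq0 := dS_eq0;
     ms_dist_sym := dS_sym; ms_dist_tri := dS_tri |}.
End Glue.

Lemma bound_point (M : MetricSpace) (a : M) (l : list M) :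
  exists C, 0 <= C /\ forall y, In y l -> ms_dist M a y <= C.
Proof.
  induction l as [|b l [C [HC0 HC]]].
  - exists 0. split; [lra|]. intros y [].
  - exists (Rmax C (ms_dist M a b)). split.
    + apply Rle_trans with C; [lra|apply Rmax_l].
    + intros y [<-|Hy]; [apply Rmax_r|]. apply Rle_trans with C; [auto|apply Rmax_l].
Qed.

Lemma bound_list (M : MetricSpace) (l : list M) :
  exists B, 0 <= B /\ forall x y, In x l -> In y l -> ms_dist M x y <= B.
Proof.
  induction l as [|a l [B [HB0 HB]]].
  - exists 0. split; [lra|]. intros x y [].
  - destruct (bound_point M a l) as [C [HC0 HC]].
    exists (B + C). split; [lra|].
    intros x y [<-|Hx] [<-|Hy].
    + rewrite (proj2 (ms_dist_eq0 M a a) eq_refl). lra.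
    + specialize (HC y Hy). lra.
    + specialize (HC x Hx). rewrite ms_dist_sym. lra.
    + specialize (HB x y Hx Hy). lra.
Qed.

Lemma bound_exists (M : MetricSpace) (hM : finite_metric M) :
  exists B, 0 <= B /\ forall x y, ms_dist M x y <= B.
Proof.
  destruct hM as [l Hl]. destruct (bound_list M l) as [B [H0 H]].
  exists B. split; auto.
Qed.

Lemma my_choice {A : Type} {B : A -> Type} (Rl : forall a, B a -> Prop) :
  (forall a, exists b, Rl a b) -> exists f : forall a, B a, forall a, Rl a (f a).
Proof.
  intro H. exists (fun a => proj1_sig (constructive_indefinite_description _ (H a))).
  intro a. exact (proj2_sig (constructive_indefinite_description _ (H a))).
Qed.

Theorem mainTheorem14 (P : BanachSpace -> Prop)
  (hfin : forall X : BanachSpace, finite_dim X -> P X)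
  (Sn : nat -> MetricSpace)
  (hSfin : forall n, finite_metric (Sn n))
  (htest : test_spaces Sn P) :
  exists S : MetricSpace, test_space S P.
Proof.
  pose (Bf := fun n => proj1_sig (constructive_indefinite_description _ (bound_exists (Sn n) (hSfin n)))).
  assert (hB : forall n, 0 <= Bf n /\ forall x y, ms_dist (Sn n) x y <= Bf n).
  { intro n. unfold Bf. destruct (constructive_indefinite_description _ _). exact a. }
  exists (glue Sn Bf hB). intro X. split.
  - intro nP. destruct (proj1 (htest X) nP) as [D HD].
    assert (Hu : exists u : X, bs_norm X u = 1).
    { destruct (classic (exists x : X, x <> bs_zero X)) as [[x0 Hx0]|Hno].
      - exists (bs_scal X (/ bs_norm X x0) x0). rewrite bs_norm_scal.
        assert (Hp : 0 < bs_norm X x0).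
        { destruct (bs_norm_nonneg X x0) as [h|h]; auto.
          exfalso; apply Hx0, bs_norm_eq0; auto. }
        rewrite Rabs_right by (left; apply Rinv_0_lt_compat; lra). field; lra.
      - exfalso. apply nP, hfin. exists nil. intro x. exists nil. split; [reflexivity|].
        simpl. apply NNPP. intro Hx. apply Hno. exists x. exact Hx. }
    destruct Hu as [u Hu].
    set (D' := Rmax D 1).
    assert (HD1 : 1 <= D') by apply Rmax_r.
    assert (HE : forall n, exists p : (Sn n -> X) * R, 0 < snd p /\ forall x y,
       snd p * ms_dist _ x y <= bs_dist X (fst p x) (fst p y) /\
       bs_dist X (fst p x) (fst p y) <= D' * snd p * ms_dist _ x y).
    { intro n. destruct (HD n) as [f [r [Hr Hf]]]. exists (f, r). simpl. split; auto.
      intros x y. destruct (Hf x y). split; auto.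
      apply Rle_trans with (D * r * ms_dist _ x y); auto.
      apply Rmult_le_compat_r; [apply ms_dist_nonneg|].
      apply Rmult_le_compat_r; [lra|apply Rmax_l]. }
    destruct (my_choice _ HE) as [pF hp].
    pose (c := fun n => / (1 + Bf n) / snd (pF n)).
    pose (G := fun n x => bs_scal X (c n) (fst (pF n) x)).
    assert (Hc : forall n, 0 < c n).
    { intro n. unfold c. destruct (hp n) as [h _].
      apply Rmult_lt_0_compat; [apply (s_pos Sn Bf hB)|apply Rinv_0_lt_compat; auto]. }
    assert (HG : forall n x y,
      / (1 + Bf n) * ms_dist _ x y <= bs_norm X (bs_add X (G n x) (bs_opp X (G n y))) /\
      bs_norm X (bs_add X (G n x) (bs_opp X (G n y))) <= D' * (/ (1 + Bf n) * ms_dist _ x y)).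
    { intros n x y. unfold G. rewrite <- scal_sub, bs_norm_scal. rewrite Rabs_right by (left; apply Hc).
      destruct (hp n) as [hr hf]. destruct (hf x y) as [h1 h2]. unfold bs_dist in h1, h2.
      pose proof (Hc n).
      assert (E : c n * (snd (pF n) * ms_dist _ x y) = / (1 + Bf n) * ms_dist _ x y).
      { unfold c. pose proof (proj1 (hB n)). field. split; lra. }
      split.
      - rewrite <- E. apply Rmult_le_compat_l; lra.
      - apply Rle_trans with (c n * (D' * snd (pF n) * ms_dist _ x y)).
        + apply Rmult_le_compat_l; lra.
        + rewrite <- E. lra. }
    assert (HV : forall n, exists v : X, forall x,
       bs_norm X (bs_add X (G n x) (bs_opp X v)) <= D').
    { intro n. destruct (classic (exists x : Sn n, True)) as [[x0 _]|Hne].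
      - exists (G n x0). intro x. destruct (HG n x x0) as [_ h].
        pose proof (s_le1 Sn Bf hB n x x0).
        pose proof (Rmult_le_compat_l D' _ _ ltac:(lra) H). lra.
      - exists (bs_zero X). intro x. exfalso. apply Hne. exists x. auto. }
    destruct (my_choice _ HV) as [vF hv].
    pose (F := fun p : car Sn => match p with existT _ n x =>
      bs_add X (bs_add X (G n x) (bs_opp X (vF n))) (bs_scal X (4 * D' * INR n) u) end).
    exists (6 * D'). intros _. exists F, 1. split; [lra|].
    intros [n x] [m y].
    change (ms_dist (glue Sn Bf hB) (existT _ n x) (existT _ m y))
      with (dS Sn Bf (existT _ n x) (existT _ m y)).
    unfold bs_dist. cbv beta iota delta [F].
    destruct (Nat.eq_dec n m) as [<-|Hnm].
    + rewrite (dS_same Sn Bf). rewrite !sub_same. destruct (HG n x y) as [h1 h2].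
      pose proof (dS_nonneg Sn Bf hB (existT _ n x) (existT _ n y)) as h3.
      rewrite (dS_same Sn Bf) in h3.
      split; [lra|]. nra.
    + rewrite (dS_diff Sn Bf _ _ _ _ Hnm). rewrite sub_add_add, sub_scal.
      set (A := bs_add X (bs_add X (G n x) (bs_opp X (vF n)))
                   (bs_opp X (bs_add X (G m y) (bs_opp X (vF m))))).
      set (Bv := bs_scal X (4 * D' * INR n - 4 * D' * INR m) u).
      assert (hA : bs_norm X A <= 2 * D').
      { unfold A. pose proof (norm_sub_le X (bs_add X (G n x) (bs_opp X (vF n)))
                     (bs_add X (G m y) (bs_opp X (vF m)))).
        pose proof (hv n x). pose proof (hv m y). lra. }
      set (k := Rabs (INR n - INR m)).
      assert (hk : 1 <= k) by (apply INR_sep; exact Hnm).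
      assert (hBv : bs_norm X Bv = 4 * D' * k).
      { unfold Bv, k. rewrite bs_norm_scal, Hu.
        replace (4 * D' * INR n - 4 * D' * INR m) with ((4 * D') * (INR n - INR m)) by ring.
        rewrite Rabs_mult, (Rabs_right (4 * D')) by lra. ring. }
      pose proof (rev_tri X A Bv). pose proof (bs_norm_tri X A Bv).
      assert (D' * k >= D') by nra. assert (D' * k >= k) by nra.
      split; nra.
  - intros [D HD]. apply (htest X). exists D. intro n.
    destruct (HD tt) as [f [r [Hr Hf]]].
    exists (fun x => f (existT _ n x)), (r * / (1 + Bf n)). split.
    + apply Rmult_lt_0_compat; [exact Hr|apply (s_pos Sn Bf hB)].
    + intros x y. specialize (Hf (existT _ n x) (existT _ n y)).
      change (ms_dist (glue Sn Bf hB) (existT _ n x) (existT _ n y)) with (dS Sn Bf (existT _ n x) (existT _ n y)) in Hf. rewrite (dS_same Sn Bf) in Hf. split; [lra|].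
      replace (D * (r * / (1 + Bf n)) * ms_dist (Sn n) x y)
        with (D * r * (/ (1 + Bf n) * ms_dist (Sn n) x y)) by ring. lra.
Qed.
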